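(* Consider the multi-market oligopoly of equal capacity $\mathcal{G}$ described in the context, and suppose the functions $u_x$ ($x\in E$) and $c$ satisfy: each $u_x$ is concave and differentiable; $c$ is convex and differentiable; and at least one of the following holds: (a) all but at most one of the $u_x$ are strictly concave, or (b) $c$ is strictly convex. Then for every player $i\in N$ and every opponent aggregate $\mathbf{s}_{-i}\in S_{-i}=(n-1)\Delta^{m-1}$, the payoff $\mathbf{s}_i\mapsto u_i(\mathbf{s}_i;\mathbf{s}_{-i})$ is strictly concave on $\Delta^{m-1}$.
   Context: Let $N=\{1,\dots,n\}$ be a set of firms (players) and $E=\{1,\dots,m\}$ a set of markets. Let $\Delta^{m-1}=\{\mathbf{v}\in\mathbb{R}^m:\mathbf{v}\ge 0,\ \mathbf{v}^{T}\mathbf{1}=1\}$. Each firm $i$ chooses a strategy $\mathbf{s}_i=(s_{ix})_{x=1}^m\in S_i=\Delta^{m-1}$ (it allocates one unit of resource across markets). For each market $x$ let $u_x:\mathbb{R}_{\ge 0}\to\mathbb{R}_{\ge 0}$ with $u_x(0)=0$ (total revenue in market $x$), and let $p_x(t)=u_x(t)/t$ for $t>0$. Let $c:\Delta^{m-1}\to\mathbb{R}_{\ge 0}$ be a common cost function. For a strategy profile $\mathbf{S}=(\mathbf{s}_i)_{i=1}^n$ put $s_x=\sum_{i=1}^n s_{ix}$, $\mathbf{s}_{-i}=\sum_{j\ne i}\mathbf{s}_j$ (so $s_x=s_{ix}+s_{-ix}$). The payoff of player $i$ is $u_i(\mathbf{s}_i;\mathbf{s}_{-i})=\sum_{x=1}^m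 p_x(s_x)s_{ix}-c(\mathbf{s}_i)$ (a term with $s_x=0$ is taken to be $0$). The game is $\mathcal{G}=(N,S,(u_i)_{i=1}^n)$ with $S=\prod_{i=1}^n \Delta^{m-1}$. *)

(* Defs.v *)
From HB Require Import structures.
From mathcomp Require Import all_boot all_order all_algebra.
From mathcomp Require Import all_classical all_reals all_analysis.
Set Implicit Arguments. Unset Strict Implicit. Unset Printing Implicit Defensive.
Import Order.TTheory GRing.Theory Num.Theory.
Import numFieldNormedType.Exports.
Local Open Scope ring_scope.

Definition scaled_simplex (R : realType) (m : nat) (k : R) (v : 'rV[R]_m) : Prop :=
  (forall x : 'I_m, 0 <= v ord0 x) /\ \sum_(x < m) v ord0 x = k.

Definition simplex (R : realType) (m : nat) (v : 'rV[R]_m) : Prop :=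
  scaled_simplex 1 v.

Definition concave_on (R : realType) (V : lmodType R) (A : V -> Prop) (f : V -> R) :=
  forall x y t, A x -> A y -> 0 <= t -> t <= 1 ->
    t * f x + (1 - t) * f y <= f (t *: x + (1 - t) *: y).

Definition strictly_concave_on (R : realType) (V : lmodType R) (A : V -> Prop) (f : V -> R) :=
  forall x y t, A x -> A y -> x != y -> 0 < t -> t < 1 ->
    t * f x + (1 - t) * f y < f (t *: x + (1 - t) *: y).

Definition convex_on (R : realType) (V : lmodType R) (A : V -> Prop) (f : V -> R) :=
  concave_on A (fun v => - f v).

Definition strictly_convex_on (R : realType) (V : lmodType R) (A : V -> Prop) (f : V -> R) :=
  strictly_concave_on A (fun v => - f v).

Definition price (R : realType) (u : R -> R) (t : R) : R := u t / t.

(* u_i(s_i; s_{-i}) = sum_x p_x(s_x) s_{ix} - c(s_i), with s_x = s_{ix} + s_{-ix};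
   a term with s_x = 0 is taken to be 0. *)
Definition payoff (R : realType) (m : nat) (u : 'I_m -> R -> R)
    (c : 'rV[R]_m -> R) (si smi : 'rV[R]_m) : R :=
  \sum_(x < m)
     (if si ord0 x + smi ord0 x == 0 then 0
      else price (u x) (si ord0 x + smi ord0 x) * si ord0 x)
  - c si.

(* Main.v *)
Require Import Defs.
From HB Require Import structures.
From mathcomp Require Import all_boot all_order all_algebra.
From mathcomp Require Import all_classical all_reals all_analysis.
Import Order.TTheory GRing.Theory Num.Theory.
Import numFieldNormedType.Exports.
From mathcomp Require Import ring lra.
Local Open Scope ring_scope.

Set Implicit Arguments.
Section L.
Variable R : realFieldType.
Variable f : R -> R.
Hypothesis hc : forall x y t, 0<=x -> 0<=y -> 0<=t -> t<=1 ->
   t*f x + (1-t)*f y <= f (t*x+(1-t)*y).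
Hypothesis f0 : f 0 = 0.

Lemma mono_avg t1 t2 : 0 < t1 -> 0 < t2 -> t1 <= t2 -> t1 * f t2 <= t2 * f t1.
Proof.
move=> h1 h2 h12.
have q0 : 0 <= t1/t2 by rewrite divr_ge0 // ltW.
have q1 : t1/t2 <= 1 by rewrite ler_pdivrMr // mul1r.
have H := hc t2 0 (t1/t2) (ltW h2) (lexx 0) q0 q1.
rewrite f0 !mulr0 !addr0 divfK ?gt_eqF // in H.
have e : t2 * (t1/t2) = t1 by rewrite mulrC divfK ?gt_eqF.
have := ler_wpM2l (ltW h2) H. by rewrite mulrA e.
Qed.

Lemma Gfact t1 t2 : 0 < t1 -> 0 < t2 -> 0 <= (t2-t1)*(t2*f t1 - t1*f t2).
Proof.
move=> h1 h2; have [h|h] := leP t1 t2.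
  apply: mulr_ge0; rewrite subr_ge0 //; exact: (@mono_avg t1 t2).
have := @mono_avg t2 t1 h2 h1 (ltW h). 
move=> H; rewrite -mulrNN; apply: mulr_ge0; rewrite opprB subr_ge0 //; exact: ltW.
Qed.

Definition gfun (b a : R) := if a + b == 0 then 0 else (f (a+b) / (a+b)) * a.

Lemma gfun0 a : 0 <= a -> gfun 0 a = f a.
Proof.
move=> ha; rewrite /gfun addr0; case: eqP => [->|h]; first by rewrite f0.
by rewrite divfK //; apply/eqP.
Qed.

Lemma ident (b l x y fx fy ft : R) : x != 0 -> y != 0 -> l*x+(1-l)*y != 0 ->
 ft / (l*x+(1-l)*y) * (l*x+(1-l)*y - b) - (l*(fx/x*(x-b)) + (1-l)*(fy/y*(y-b))) =
 (((l*x+(1-l)*y)-b)*x*y*(ft - (l*fx+(1-l)*fy)) + l*(1-l)*b*((y-x)*(y*fx - x*fy)))/((l*x+(1-l)*y)*x*y).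
Proof. move=> hx hy hT. by field; rewrite hx hy hT. Qed.

Lemma gfunE b a : 0 < b -> 0 <= a -> gfun b a = f (a+b)/(a+b) * ((a+b)-b).
Proof. by move=> hb ha; rewrite /gfun gt_eqF ?addrK // ltr_wpDl. Qed.

Lemma gmain b a1 a2 l : 0 < b -> 0 <= a1 -> 0 <= a2 -> 0 <= l -> l <= 1 ->
  gfun b (l*a1+(1-l)*a2) - (l * gfun b a1 + (1-l) * gfun b a2) =
  (((l*(a1+b)+(1-l)*(a2+b))-b)*(a1+b)*(a2+b)*(f (l*(a1+b)+(1-l)*(a2+b)) - (l*f (a1+b)+(1-l)*f (a2+b)))
    + l*(1-l)*b*(((a2+b)-(a1+b))*((a2+b)*f (a1+b) - (a1+b)*f (a2+b))))
   /((l*(a1+b)+(1-l)*(a2+b))*(a1+b)*(a2+b)).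
Proof.
move=> hb h1 h2 hl0 hl1.
have pa : 0 <= l*a1+(1-l)*a2 by rewrite addr_ge0 // mulr_ge0 // subr_ge0.
rewrite !gfunE //.
have eT : l*a1+(1-l)*a2 + b = l*(a1+b)+(1-l)*(a2+b) by ring.
rewrite eT; apply: ident; rewrite gt_eqF // -?eT ltr_wpDl //.
Qed.

Lemma gconc b a1 a2 l : 0 <= b -> 0 <= a1 -> 0 <= a2 -> 0 <= l -> l <= 1 ->
  l * gfun b a1 + (1-l) * gfun b a2 <= gfun b (l*a1+(1-l)*a2).
Proof.
move=> hb h1 h2 hl0 hl1.
have pa : 0 <= l*a1+(1-l)*a2 by rewrite addr_ge0 // mulr_ge0 // subr_ge0.
have [b0|bp] := eqVneq b 0.
  by rewrite b0 !gfun0 //; apply: hc.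
have {}hb : 0 < b by rewrite lt0r bp.
rewrite -subr_ge0 gmain //.
have p1 : 0 < a1 + b by rewrite ltr_wpDl.
have p2 : 0 < a2 + b by rewrite ltr_wpDl.
have eT : l*(a1+b)+(1-l)*(a2+b) = l*a1+(1-l)*a2 + b by ring.
apply: divr_ge0; last by rewrite eT !mulr_ge0 // ?ltW // ltr_wpDl.
apply: addr_ge0.
  apply: mulr_ge0; last by rewrite subr_ge0; apply: hc => //; apply: ltW.
  by rewrite eT addrK !mulr_ge0 // ltW.
apply: mulr_ge0; last exact: Gfact.
by rewrite !mulr_ge0 ?subr_ge0 // ltW.
Qed.

Lemma gsconc (hsc : forall x y t, 0<=x -> 0<=y -> x != y -> 0<t -> t<1 ->
   t*f x + (1-t)*f y < f (t*x+(1-t)*y)) b a1 a2 l :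
  0 <= b -> 0 <= a1 -> 0 <= a2 -> a1 != a2 -> 0 < l -> l < 1 ->
  l * gfun b a1 + (1-l) * gfun b a2 < gfun b (l*a1+(1-l)*a2).
Proof.
move=> hb h1 h2 hne hl0 hl1.
have pa : 0 < l*a1+(1-l)*a2.
  have [a1p|a1n] := ltrP 0 a1.
    by rewrite ltr_wpDr ?mulr_gt0 ?mulr_ge0 ?subr_ge0 ?subr_gt0 // ltW.
  have a10 : a1 = 0 by apply/eqP; rewrite eq_le a1n h1.
  rewrite a10 mulr0 add0r mulr_gt0 ?subr_gt0 // lt0r h2 andbT.
  by rewrite eq_sym -a10.
have [b0|bp] := eqVneq b 0.
  have pa' := ltW pa. by rewrite b0 !gfun0 //; apply: hsc.
have {}hb : 0 < b by rewrite lt0r bp.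
have hl0' := ltW hl0; have hl1' := ltW hl1.
rewrite -subr_gt0 gmain //.
have p1 : 0 < a1 + b by rewrite ltr_wpDl.
have p2 : 0 < a2 + b by rewrite ltr_wpDl.
have eT : l*(a1+b)+(1-l)*(a2+b) = l*a1+(1-l)*a2 + b by ring.
apply: divr_gt0; last by rewrite eT !mulr_gt0 // ltr_wpDl // ltW.
apply: ltr_wpDr.
  apply: mulr_ge0; last exact: Gfact.
  by rewrite !mulr_ge0 ?subr_ge0 // ltW.
apply: mulr_gt0; last first.
  rewrite subr_gt0; apply: hsc; [exact: ltW p1 | exact: ltW p2 | | done | done].
  by apply: contra hne => /eqP e; apply/eqP; move: e => /addIr.
rewrite eT addrK; apply: mulr_gt0 => //; apply: mulr_gt0 => //.

Qed.
End L.
Unset Implicit Arguments.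
Arguments gfun {R} f b a.
Arguments gconc {R} f.
Arguments gsconc {R} f.

Lemma sum_lt (R : realFieldType) (m : nat) (F G : 'I_m -> R) k :
  (forall i, F i <= G i) -> F k < G k -> \sum_i F i < \sum_i G i.
Proof.
move=> hle hlt; rewrite (bigD1 k) //= [X in _ < X](bigD1 k) //=.
by apply: ltr_leD => //; apply: ler_sum => j _.
Qed.

Theorem proposition1 (R : realType) (n m : nat)
  (u : 'I_m -> R -> R) (c : 'rV[R]_m -> R)
  (* u_x : R_{>=0} -> R_{>=0}, u_x(0) = 0 *)
  (hu0 : forall x, u x 0 = 0)
  (hupos : forall x t, 0 <= t -> 0 <= u x t)
  (* each u_x is concave and differentiable on R_{>=0} (one-sided at 0) *)
  (hucav : forall x, concave_on (fun t : R^o => 0 <= t) (u x))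
  (hudiff : forall x t, 0 < t -> derivable (u x) t 1)
  (hudiff0 : forall x, cvg ((fun h : R => h^-1 * (u x h - u x 0)) @ at_right 0)%classic)
  (* c : Delta^{m-1} -> R_{>=0}, convex and differentiable *)
  (hcpos : forall v, simplex v -> 0 <= c v)
  (hcvx : convex_on (@simplex R m) c)
  (hcdiff : forall v, simplex v -> differentiable c v)
  (* (a) all but at most one u_x strictly concave, or (b) c strictly convex *)
  (hstrict :
     (forall x y : 'I_m,
        ~ strictly_concave_on (fun t : R^o => 0 <= t) (u x) ->
        ~ strictly_concave_on (fun t : R^o => 0 <= t) (u y) -> x = y)
     \/ strictly_convex_on (@simplex R m) c) :
  forall (i : 'I_n) (smi : 'rV[R]_m),
    scaled_simplex (n.-1)%:R smi ->
    strictly_concave_on (@simplex R m) (fun si => payoff u c si smi).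
Proof.
move=> i smi [smi0 _] x y l hx hy hxy hl0 hl1.
have hc k : forall a b t, 0<=a -> 0<=b -> 0<=t -> t<=1 ->
   t*u k a + (1-t)*u k b <= u k (t*a+(1-t)*b) by exact: hucav.
have hl0' := ltW hl0; have hl1' := ltW hl1.
have pE v : payoff u c v smi = \sum_k gfun (u k) (smi ord0 k) (v ord0 k) - c v by [].
rewrite !pE.
set z := l *: x + (1-l) *: y.
have zE k : z ord0 k = l * x ord0 k + (1-l) * y ord0 k by rewrite !mxE.
have mix : l * (\sum_k gfun (u k) (smi ord0 k) (x ord0 k)) + (1-l) * (\sum_k gfun (u k) (smi ord0 k) (y ord0 k))
   = \sum_k (l * gfun (u k) (smi ord0 k) (x ord0 k) + (1-l) * gfun (u k) (smi ord0 k) (y ord0 k)).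
  by rewrite !mulr_sumr -big_split.
have Hle k : l * gfun (u k) (smi ord0 k) (x ord0 k) + (1-l) * gfun (u k) (smi ord0 k) (y ord0 k)
   <= gfun (u k) (smi ord0 k) (z ord0 k).
  by rewrite zE; apply: gconc => //; [exact: hc | exact: hx.1 | exact: hy.1].
have Hc := hcvx x y l hx hy hl0' hl1'.
case: hstrict => [ha|hb].
  have [k hk] : exists k, x ord0 k != y ord0 k.
    case/boolP: [exists k, x ord0 k != y ord0 k] => [/existsP //|/existsPn H].
    by case/eqP: hxy; apply/rowP => k; apply/eqP; move: (H k); rewrite negbK.
  have [k2 /andP [hk2 hk2']] : exists k2, (k2 != k) && (x ord0 k2 != y ord0 k2).
    case/boolP: [exists k2, (k2 != k) && (x ord0 k2 != y ord0 k2)] => [/existsP //|/existsPn H].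
    exfalso; move/eqP: hk; apply.
    have ex := hx.2; have ey := hy.2.
    rewrite (bigD1 k) //= in ex; rewrite (bigD1 k) //= in ey.
    have e : \sum_(j < m | j != k) x ord0 j = \sum_(j < m | j != k) y ord0 j.
      apply: eq_bigr => j hj; apply/eqP; move: (H j); rewrite hj /= negbK //.
    by rewrite e -ey in ex; move/addIr: ex.
  have [k0 [hk0 hs]] : exists k0, x ord0 k0 != y ord0 k0 /\
      strictly_concave_on (fun t : R^o => 0 <= t) (u k0).
    case: (pselect (strictly_concave_on (fun t : R^o => 0 <= t) (u k))) => h1.
      by exists k.
    case: (pselect (strictly_concave_on (fun t : R^o => 0 <= t) (u k2))) => h2.
      by exists k2.
    by move: (ha _ _ h1 h2) hk2 => ->; rewrite eqxx.
  have Hlt : l * gfun (u k0) (smi ord0 k0) (x ord0 k0) + (1-l) * gfun (u k0) (smi ord0 k0) (y ord0 k0)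
   < gfun (u k0) (smi ord0 k0) (z ord0 k0).
    have hsc : forall a b t, 0<=a -> 0<=b -> a != b -> 0<t -> t<1 ->
     t*u k0 a + (1-t)*u k0 b < u k0 (t*a+(1-t)*b) by exact: hs.
    by rewrite zE; apply: gsconc => //; [exact: hc | exact: hx.1 | exact: hy.1].
  have := @sum_lt _ _ _ _ k0 Hle Hlt; rewrite -mix => HS.
  move: Hc; rewrite -/z => Hc.
  lra.
have HS : l * (\sum_k gfun (u k) (smi ord0 k) (x ord0 k)) + (1-l) * (\sum_k gfun (u k) (smi ord0 k) (y ord0 k))
   <= \sum_k gfun (u k) (smi ord0 k) (z ord0 k).
  by rewrite mix; apply: ler_sum => k _; apply: Hle.
have := hb x y l hx hy hxy hl0 hl1; rewrite -/z => Hc'.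
lra.
Qed.
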